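(* Let $c,d>0$ with $cd\le1$, $g(x)=xF(c,d;c+d;x)$ for $x\in(0,1)$, and $b\ge a>0$. Then for every $s\ge1$, $$1\le\frac{g\!\left(\frac{s^b}{1+s^b}\right)}{g\!\left(\frac{s^a}{1+s^a}\right)}\le\frac ba.$$
   Context: $F(a,b;c;x)$ is the Gaussian hypergeometric function $\sum_{n\ge0}\frac{(a)_n(b)_n}{(c)_n}\frac{x^n}{n!}$ ($|x|<1$), with $(a)_n=a(a+1)\cdots(a+n-1)$, $(a)_0=1$. (In the claim, $a,b$ denote the exponents, not hypergeometric parameters.) *)

(* Defs.v *)
From Stdlib Require Import Reals Factorial.
Open Scope R_scope.

Fixpoint poch (a : R) (n : nat) : R :=
  match n with
  | O => 1
  | S k => poch a k * (a + INR k)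
  end.

Definition hyp_term (a b c x : R) (n : nat) : R :=
  poch a n * poch b n / poch c n * x ^ n / INR (fact n).

Definition hypF (a b c x l : R) : Prop := infinite_sum (hyp_term a b c x) l.

Definition g_val (c d x v : R) : Prop :=
  exists l, hypF c d (c + d) x l /\ v = x * l.

(* Main.v *)
Require Import Defs.
From Stdlib Require Import Reals Factorial Lra Lia Psatz.
From Coquelicot Require Import Coquelicot.
Open Scope R_scope.

Definition P (N : nat) (x : R) := sum_f_R0 (fun n => x ^ (S n) / INR (S n)) N.
Definition G (N : nat) (x : R) := sum_f_R0 (fun n => x ^ n) N.

Lemma P_deriv N x : is_derive (P N) x (G N x).
Proof.
  induction N.
  - unfold P, G; simpl. auto_derive; auto. simpl; field.
  - replace (G (S N) x) with (plus (G N x) (x ^ S N)) by reflexivity.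
    apply is_derive_ext with (fun y => plus (P N y) (y ^ S (S N) / INR (S (S N)))).
    { intros t; reflexivity. }
    apply (@is_derive_plus R_AbsRing R_NormedModule); [exact IHN|].
    assert (INR (S (S N)) <> 0) by (apply not_0_INR; lia).
    auto_derive; auto.
    change (match N with 0%nat => 1 | S _ => INR N + 1 end) with (INR (S N)).
    rewrite <- S_INR. simpl. field. exact H.
Qed.

Lemma G_mul N x : G N x * (1 - x) = 1 - x ^ (S N).
Proof.
  induction N; unfold G in *; simpl; [ring|]. rewrite Rmult_plus_distr_r, IHN. simpl. ring.
Qed.

Lemma nonincr (f df : R -> R) (a b : R) : a <= b ->
  (forall x, a <= x <= b -> is_derive f x (df x)) ->
  (forall x, a <= x <= b -> df x <= 0) -> f b <= f a.
Proof.
  intros Hab Hd Hn.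
  destruct (Req_dec a b) as [->|Hne]; [lra|].
  destruct (MVT_gen f a b df) as [c [Hc He]].
  - intros x Hx. apply Hd. rewrite Rmin_left in Hx; [|lra]. rewrite Rmax_right in Hx; lra.
  - intros x Hx. rewrite Rmin_left in Hx; [|lra]. rewrite Rmax_right in Hx; [|lra].
    apply continuity_pt_filterlim. apply (@ex_derive_continuous R_AbsRing R_NormedModule).
    eexists; apply Hd; lra.
  - rewrite Rmin_left in Hc; [|lra]. rewrite Rmax_right in Hc; [|lra].
    assert (df c <= 0) by (apply Hn; lra). nra.
Qed.

Lemma tail N x : 0 <= x < 1 ->
  - ln (1 - x) - P N x <= x ^ (S (S N)) / (INR (S (S N)) * (1 - x)).
Proof.
  intros Hx.
  set (K := INR (S (S N))).
  assert (HK : 0 < K) by (apply lt_0_INR; lia).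
  set (f := fun t => - (t ^ (S (S N)) / (K * (1 - t)) + ln (1 - t) + P N t)).
  assert (Hf : f x <= f 0).
  { apply (nonincr f (fun t => - (t ^ (S (S N)) / (K * (1 - t) ^ 2))) 0 x); [lra| |].
    - intros t Ht.
      evar (dA : R).
      assert (HA : is_derive (fun t => t ^ (S (S N)) / (K * (1 - t)) + ln (1 - t)) t dA).
      { auto_derive. repeat split; try lra; try (apply Rgt_not_eq; apply Rmult_lt_0_compat; lra).
        subst dA; reflexivity. }
      unfold f.
      apply is_derive_ext with (fun t => opp (plus (t ^ (S (S N)) / (K * (1 - t)) + ln (1 - t)) (P N t))).
      { intros; reflexivity. }
      replace (- (t ^ (S (S N)) / (K * (1 - t) ^ 2))) with (opp (plus dA (G N t))).
      + apply (@is_derive_opp R_AbsRing R_NormedModule). apply (@is_derive_plus R_AbsRing R_NormedModule); [exact HA| apply P_deriv].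
      + subst dA. assert (HG := G_mul N t).
        assert (G N t = (1 - t ^ S N) / (1 - t)) as -> by (field_simplify_eq; [lra| lra]).
        unfold opp, plus; simpl.
        change (match N with 0%nat => 1 | S _ => INR N + 1 end) with (INR (S N)).
        unfold K. rewrite !S_INR. field. split; [lra|].
        rewrite <- !S_INR. apply not_0_INR; lia.
    - intros t Ht. 
      assert (0 <= t ^ S (S N) / (K * (1 - t) ^ 2)).
      { apply Rmult_le_pos; [apply pow_le; lra|]. apply Rlt_le, Rinv_0_lt_compat.
        apply Rmult_lt_0_compat; [lra|]. apply pow_lt; lra. }
      lra. }
  unfold f in Hf.
  replace (1 - 0) with 1 in Hf by ring. rewrite ln_1 in Hf.
  assert (P N 0 = 0).
  { unfold P. clear. induction N; [simpl; field|].
    replace (sum_f_R0 _ (S N)) with (sum_f_R0 (fun n => 0^S n/INR (S n)) N + 0^(S(S N))/INR(S(S N))) by reflexivity.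
    rewrite IHN, pow_i by lia. unfold Rdiv; ring. }
  rewrite H in Hf. rewrite pow_i in Hf by lia. unfold Rdiv in *. rewrite Rmult_0_l in Hf. lra.
Qed.

Lemma Q_nonneg N x : /2 <= x < 1 ->
  0 <= P N x - ln (x / (1 - x)) * x * (1 - x) * G N x.
Proof.
  intros Hx.
  set (L := ln (x / (1 - x))).
  assert (HL : 0 <= L).
  { unfold L. rewrite <- ln_1. apply ln_le; [lra|].
    apply (Rmult_le_reg_r (1 - x)); [lra|]. unfold Rdiv. rewrite Rmult_assoc, Rinv_l; lra. }
  assert (HN1 : 1 <= INR (S N)) by (apply (le_INR 1); lia).
  destruct (Rle_or_lt (L * (1 - x)) (/ INR (S N))) as [HA|HB].
  - assert (Hall : forall k, (k <= N)%nat -> 0 <= P k x - L * x * (1 - x) * G k x).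
    { induction k; intros Hk.
      - unfold P, G; simpl.
        assert (/ INR (S N) <= 1).
        { rewrite <- Rinv_1. apply Rinv_le_contravar; lra. }
        nra.
      - replace (P (S k) x) with (P k x + x ^ S (S k) / INR (S (S k))) by reflexivity.
        replace (G (S k) x) with (G k x + x ^ S k) by reflexivity.
        assert (IH := IHk ltac:(lia)).
        assert (Hk1 : / INR (S N) <= / INR (S (S k))).
        { apply Rinv_le_contravar; [apply lt_0_INR; lia| apply le_INR; lia]. }
        assert (Hz : 0 <= x * x ^ S k) by (apply Rmult_le_pos; [lra| apply pow_le; lra]).
        replace (x ^ S (S k)) with (x * x ^ S k) by reflexivity.
        unfold Rdiv.
        assert (x * x ^ S k * (L * (1 - x)) <= x * x ^ S k * / INR (S (S k))).
        { apply Rmult_le_compat_l; lra. }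
        nra. }
    apply Hall; lia.
  - assert (HK : 0 < INR (S (S N))) by (apply lt_0_INR; lia).
    assert (HKK : / INR (S (S N)) < / INR (S N)).
    { apply Rinv_lt_contravar; [nra| apply lt_INR; lia]. }
    assert (H1 : 1 <= L * (1 - x) * INR (S (S N))).
    { apply (Rmult_le_reg_r (/ INR (S (S N)))); [apply Rinv_0_lt_compat; lra|].
      rewrite Rmult_assoc, Rinv_r by lra. lra. }
    assert (Ht := tail N x ltac:(lra)).
    assert (Hz : 0 <= x ^ S (S N)) by (apply pow_le; lra).
    assert (Ht2 : x ^ S (S N) / (INR (S (S N)) * (1 - x)) <= L * x ^ S (S N)).
    { apply (Rmult_le_reg_r (INR (S (S N)) * (1 - x))); [nra|].
      unfold Rdiv. rewrite Rmult_assoc, Rinv_l by nra. nra. }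
    assert (HE : L * x <= - ln (1 - x)).
    { unfold L. rewrite ln_div by lra.
      assert (ln x <= 0) by (rewrite <- ln_1; apply ln_le; lra).
      assert (ln (1 - x) <= 0) by (rewrite <- ln_1; apply ln_le; lra).
      nra. }
    rewrite Rmult_assoc, (Rmult_assoc L x), (Rmult_comm (1 - x)), G_mul.
    replace (x ^ S (S N)) with (x * x ^ S N) in * by reflexivity.
    nra.
Qed.

Definition sg (y : R) := exp y / (1 + exp y).

Lemma sg_bounds y : 0 <= y -> / 2 <= sg y < 1.
Proof.
  intros Hy.
  assert (He : 1 <= exp y).
  { destruct (Req_dec y 0) as [->|]; [rewrite exp_0; lra|]. left. rewrite <- exp_0. apply exp_increasing; lra. }
  unfold sg. split.
  - apply (Rmult_le_reg_r (1 + exp y)); [lra|]. unfold Rdiv. rewrite Rmult_assoc, Rinv_l by lra. lra.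
  - apply (Rmult_lt_reg_r (1 + exp y)); [lra|]. unfold Rdiv. rewrite Rmult_assoc, Rinv_l by lra. lra.
Qed.

Lemma sg_deriv y : is_derive sg y (sg y * (1 - sg y)).
Proof.
  assert (He := exp_pos y). unfold sg. auto_derive; [lra|]. field. lra.
Qed.

Lemma ln_sg y : ln (sg y / (1 - sg y)) = y.
Proof.
  assert (He := exp_pos y).
  replace (sg y / (1 - sg y)) with (exp y). { apply ln_exp. }
  unfold sg. field. split; lra.
Qed.

Lemma star N y1 y2 : 0 < y1 <= y2 -> y1 * P N (sg y2) <= y2 * P N (sg y1).
Proof.
  intros Hy.
  set (F := fun y => P N (sg y) / y).
  assert (HF : F y2 <= F y1).
  { apply (nonincr F (fun y => (G N (sg y) * (sg y * (1 - sg y)) * y - P N (sg y) * 1) / y ^ 2) y1 y2); [lra| |].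
    - intros y Hy'. unfold F.
      apply (is_derive_div (fun y => P N (sg y)) (fun y => y)); [| apply (@is_derive_id R_AbsRing) | lra].
      replace (G N (sg y) * (sg y * (1 - sg y))) with (scal (sg y * (1 - sg y)) (G N (sg y))).
      + apply (@is_derive_comp R_AbsRing R_NormedModule); [apply P_deriv| apply sg_deriv].
      + unfold scal; simpl. unfold mult; simpl. ring.
    - intros y Hy'.
      assert (Hq := Q_nonneg N (sg y) (sg_bounds y ltac:(lra))).
      rewrite ln_sg in Hq.
      assert (0 < y ^ 2) by (apply pow_lt; lra).
      unfold Rdiv. apply Rmult_le_0_r; [| apply Rlt_le, Rinv_0_lt_compat; lra].
      nra. }
  unfold F in HF.
  apply (Rmult_le_compat_r (y1 * y2)) in HF; [|nra].
  replace (P N (sg y2) / y2 * (y1 * y2)) with (y1 * P N (sg y2)) in HF by (field; lra).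
  replace (P N (sg y1) / y1 * (y1 * y2)) with (y2 * P N (sg y1)) in HF by (field; lra).
  exact HF.
Qed.

Lemma poch_pos a n : 0 < a -> 0 < poch a n.
Proof.
  intros Ha. induction n; simpl; [lra|]. apply Rmult_lt_0_compat; [exact IHn|].
  assert (0 <= INR n) by apply pos_INR. lra.
Qed.

Definition alpha c d n := poch c n * poch d n / poch (c + d) n / INR (fact n).
Definition gam c d n := INR (S n) * alpha c d n.

Lemma hyp_alpha c d x n : hyp_term c d (c + d) x n = alpha c d n * x ^ n.
Proof. unfold hyp_term, alpha. unfold Rdiv. ring. Qed.

Lemma alpha_pos c d n : 0 < c -> 0 < d -> 0 < alpha c d n.
Proof.
  intros. unfold alpha. unfold Rdiv.
  assert (0 < poch c n) by (apply poch_pos; lra).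
  assert (0 < poch d n) by (apply poch_pos; lra).
  assert (0 < poch (c + d) n) by (apply poch_pos; lra).
  assert (0 < INR (fact n)) by (apply lt_0_INR, lt_O_fact).
  apply Rmult_lt_0_compat; [|apply Rinv_0_lt_compat; lra].
  apply Rmult_lt_0_compat; [|apply Rinv_0_lt_compat; lra]. nra.
Qed.

Lemma alpha_S c d n : 0 < c -> 0 < d ->
  alpha c d (S n) = alpha c d n * ((c + INR n) * (d + INR n) / ((c + d + INR n) * INR (S n))).
Proof.
  intros. unfold alpha. simpl poch. rewrite fact_simpl, mult_INR.
  assert (0 < poch (c + d) n) by (apply poch_pos; lra).
  assert (0 < INR (fact n)) by (apply lt_0_INR, lt_O_fact).
  assert (0 <= INR n) by apply pos_INR.
  assert (0 < INR (S n)) by (apply lt_0_INR; lia).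
  field. repeat split; lra.
Qed.

Lemma gam_decr c d n : 0 < c -> 0 < d -> c * d <= 1 -> gam c d (S n) <= gam c d n.
Proof.
  intros Hc Hd Hcd. unfold gam. rewrite alpha_S by lra.
  assert (Ha := alpha_pos c d n Hc Hd).
  rewrite (S_INR (S n)), S_INR.
  assert (Hm : 0 <= INR n) by apply pos_INR.
  set (m := INR n) in *.
  assert (H2 : 2 * (c * d) <= c + d).
  { assert (0 < c * d) by (apply Rmult_lt_0_compat; lra).
    assert (4 * (c * d) * (c * d) <= 4 * (c * d)) by nra.
    assert (4 * (c * d) <= (c + d) * (c + d)) by (pose proof (Rle_0_sqr (c - d)); unfold Rsqr in *; nra).
    destruct (Rle_or_lt (2 * (c * d)) (c + d)) as [|Hlt]; [assumption|].
    assert ((c + d) * (c + d) < (2 * (c * d)) * (2 * (c * d))) by (apply Rmult_le_0_lt_compat; lra).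
    lra. }
  assert (Hineq : (m + 2) * ((c + m) * (d + m)) <= (m + 1) * (m + 1) * (c + d + m)) by nra.
  replace ((m + 1 + 1) * (alpha c d n * ((c + m) * (d + m) / ((c + d + m) * (m + 1)))))
    with (alpha c d n * ((m + 2) * ((c + m) * (d + m)) / ((c + d + m) * (m + 1)))) by (field; lra).
  rewrite (Rmult_comm (m + 1)). apply Rmult_le_compat_l; [lra|].
  apply (Rmult_le_reg_r ((c + d + m) * (m + 1))); [nra|].
  unfold Rdiv. rewrite Rmult_assoc, Rinv_l by nra. nra.
Qed.

Lemma sum_nonpos (D : nat -> R) M : (forall n, D n <= 0) -> sum_f_R0 D M <= 0.
Proof. intros H. induction M; simpl; [apply H|]. specialize (H (S M)). lra. Qed.

Lemma abel (g D : nat -> R) M : (forall n, g (S n) <= g n) -> (forall n, 0 <= g n) ->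
  (forall N, sum_f_R0 D N <= 0) -> sum_f_R0 (fun n => g n * D n) M <= 0.
Proof.
  intros Hg Hp HD.
  assert (Hid : forall M, sum_f_R0 (fun n => g n * D n) M =
     sum_f_R0 (fun N => (g N - g (S N)) * sum_f_R0 D N) M + g (S M) * sum_f_R0 D M).
  { induction M0; [simpl; ring|]. simpl sum_f_R0 at 1 2. rewrite IHM0.
    replace (sum_f_R0 D (S M0)) with (sum_f_R0 D M0 + D (S M0)) by reflexivity. ring. }
  rewrite Hid.
  assert (sum_f_R0 (fun N => (g N - g (S N)) * sum_f_R0 D N) M <= 0).
  { apply sum_nonpos. intros n. specialize (Hg n). specialize (HD n). nra. }
  specialize (Hp (S M)). specialize (HD M). nra.
Qed.

Lemma sum_lin (f1 f2 : nat -> R) a b M :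
  sum_f_R0 (fun n => a * f1 n - b * f2 n) M = a * sum_f_R0 f1 M - b * sum_f_R0 f2 M.
Proof. induction M; simpl; [ring|]. rewrite IHM. ring. Qed.

Lemma series_id c d x M : 0 < c -> 0 < d ->
  x * sum_f_R0 (hyp_term c d (c + d) x) M = sum_f_R0 (fun n => gam c d n * (x ^ S n / INR (S n))) M.
Proof.
  intros. assert (Ht : forall n, x * hyp_term c d (c + d) x n = gam c d n * (x ^ S n / INR (S n))).
  { intros n. rewrite hyp_alpha. unfold gam. simpl pow. field. apply not_0_INR; lia. }
  induction M; simpl sum_f_R0; [apply Ht|]. rewrite Rmult_plus_distr_l, IHM, Ht. reflexivity.
Qed.

Lemma P_nonneg N x : 0 <= x -> 0 <= P N x.
Proof.
  intros Hx. unfold P. apply cond_pos_sum. intros n.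
  apply Rmult_le_pos; [apply pow_le; lra| apply Rlt_le, Rinv_0_lt_compat, lt_0_INR; lia].
Qed.

Lemma sg_le y1 y2 : y1 <= y2 -> sg y1 <= sg y2.
Proof.
  intros H. assert (He : exp y1 <= exp y2).
  { destruct (Req_dec y1 y2) as [->|]; [lra|]. left; apply exp_increasing; lra. }
  assert (H1 := exp_pos y1). unfold sg.
  apply (Rmult_le_reg_r ((1 + exp y1) * (1 + exp y2))); [nra|].
  replace (exp y1 / (1 + exp y1) * ((1 + exp y1) * (1 + exp y2))) with (exp y1 * (1 + exp y2)) by (field; lra).
  replace (exp y2 / (1 + exp y2) * ((1 + exp y1) * (1 + exp y2))) with (exp y2 * (1 + exp y1)) by (field; lra).
  nra.
Qed.

Lemma cv_scal k (u : nat -> R) l : Un_cv u l -> Un_cv (fun n => k * u n) (k * l).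
Proof.
  intros H. apply (CV_mult (fun _ => k) u k l); [|exact H].
  intros eps He. exists 0%nat. intros. unfold Rdist. rewrite Rminus_eq_0, Rabs_R0. lra.
Qed.

Theorem mainTheorem9 (c d a b s gb ga : R)
  (hc : 0 < c) (hd : 0 < d) (hcd : c * d <= 1)
  (ha : 0 < a) (hab : a <= b) (hs : 1 <= s)
  (Hgb : g_val c d (Rpower s b / (1 + Rpower s b)) gb)
  (Hga : g_val c d (Rpower s a / (1 + Rpower s a)) ga) :
  1 <= gb / ga <= b / a.
Proof.
  set (u := ln s).
  assert (Hu : 0 <= u) by (unfold u; rewrite <- ln_1; apply ln_le; lra).
  change (Rpower s b / (1 + Rpower s b)) with (sg (b * u)) in Hgb.
  change (Rpower s a / (1 + Rpower s a)) with (sg (a * u)) in Hga.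
  set (xa := sg (a * u)) in *. set (xb := sg (b * u)) in *.
  assert (Hxa : / 2 <= xa < 1) by (apply sg_bounds; nra).
  assert (Hxb : / 2 <= xb < 1) by (apply sg_bounds; nra).
  assert (Hxab : xa <= xb) by (apply sg_le; nra).
  destruct Hga as [la [Hla ->]]. destruct Hgb as [lb [Hlb ->]].
  unfold hypF in *.
  assert (HE : forall N, a * P N xb - b * P N xa <= 0).
  { intros N. destruct (Req_dec u 0) as [Hu0|Hu0].
    - unfold xa, xb. rewrite Hu0, !Rmult_0_r. assert (0 <= P N (sg 0)) by (apply P_nonneg; unfold sg; apply Rlt_le, Rdiv_lt_0_compat; [apply exp_pos| pose proof (exp_pos 0); lra]). nra.
    - assert (Hst := star N (a * u) (b * u) ltac:(split; nra)).
      fold xa xb in Hst.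
      assert (0 < u) by lra.
      assert (u * (a * P N xb - b * P N xa) <= 0) by nra.
      destruct (Rle_or_lt (a * P N xb - b * P N xa) 0) as [|Hc]; [assumption|]. nra. }
  assert (HS : forall M, a * (xb * sum_f_R0 (hyp_term c d (c + d) xb) M) <=
                         b * (xa * sum_f_R0 (hyp_term c d (c + d) xa) M)).
  { intros M. rewrite !(series_id c d _ _ hc hd).
    assert (Hab' := abel (gam c d) (fun n => a * (xb ^ S n / INR (S n)) - b * (xa ^ S n / INR (S n))) M
      (fun n => gam_decr c d n hc hd hcd)
      (fun n => Rlt_le _ _ (Rmult_lt_0_compat _ _ (lt_0_INR (S n) (Nat.lt_0_succ n)) (alpha_pos c d n hc hd)))).
    assert (Hid : sum_f_R0 (fun n => gam c d n * (a * (xb ^ S n / INR (S n)) - b * (xa ^ S n / INR (S n)))) M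
       = a * sum_f_R0 (fun n => gam c d n * (xb ^ S n / INR (S n))) M - b * sum_f_R0 (fun n => gam c d n * (xa ^ S n / INR (S n))) M).
    { rewrite <- sum_lin. apply sum_eq. intros; ring. }
    cbv beta in Hab'. rewrite Hid in Hab'.
    cut (a * sum_f_R0 (fun n => gam c d n * (xb ^ S n / INR (S n))) M - b * sum_f_R0 (fun n => gam c d n * (xa ^ S n / INR (S n))) M <= 0); [lra|].
    apply Hab'. intros N. rewrite sum_lin. apply HE. }
  assert (HL1 : a * (xb * lb) <= b * (xa * la)).
  { eapply Rle_cv_lim; [exact HS| |]; apply cv_scal, cv_scal; assumption. }
  assert (HM : forall M, xa * sum_f_R0 (hyp_term c d (c + d) xa) M <= xb * sum_f_R0 (hyp_term c d (c + d) xb) M).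
  { intros M. rewrite !(series_id c d _ _ hc hd). apply sum_Rle. intros n _.
    assert (0 < gam c d n) by (apply Rmult_lt_0_compat; [apply lt_0_INR; lia| apply alpha_pos; lra]).
    apply Rmult_le_compat_l; [lra|]. unfold Rdiv. apply Rmult_le_compat_r.
    - apply Rlt_le, Rinv_0_lt_compat, lt_0_INR; lia.
    - apply pow_incr; lra. }
  assert (HL2 : xa * la <= xb * lb).
  { eapply Rle_cv_lim; [exact HM| |]; apply cv_scal; assumption. }
  assert (Hla1 : 1 <= la).
  { replace 1 with (sum_f_R0 (hyp_term c d (c + d) xa) 0).
    - apply sum_incr; [exact Hla|]. intros n. rewrite hyp_alpha.
      apply Rmult_le_pos; [apply Rlt_le, alpha_pos; lra| apply pow_le; lra].
    - simpl. unfold hyp_term. simpl. field. }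
  assert (Hga : 0 < xa * la) by nra.
  set (ga := xa * la) in *. set (gb := xb * lb) in *.
  split.
  - apply (Rmult_le_reg_r ga); [lra|]. unfold Rdiv. rewrite Rmult_assoc, Rinv_l by lra. lra.
  - apply (Rmult_le_reg_r (ga * a)); [nra|].
    replace (gb / ga * (ga * a)) with (a * gb) by (field; lra).
    replace (b / a * (ga * a)) with (b * ga) by (field; lra). lra.
Qed.
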